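(* Let $\mathcal T$ be an infinite set of positive integers and for each $t\in\mathcal T$ let $H_t$ be a triangle-free graph on $t$ vertices that is $d$-regular with $d=\Theta(t^{2/3})$ and all of whose eigenvalues other than the largest have absolute value $O(t^{1/3})$. Then for any choice of subgraphs $H'_t\subseteq H_t$ ($t\in\mathcal T$) with $|H'_t|=(1-o(1))|H_t|$, $H'_t$ has a connected component with $t-o(t)$ vertices (asymptotics as $t\to\infty$ in $\mathcal T$).
   Context: $|H|$ denotes the number of edges. Eigenvalues are those of the adjacency matrix. *)

(* Defs.v *)
From HB Require Import structures.
From mathcomp Require Import all_boot all_order all_algebra.
From mathcomp Require Import reals exp.
Set Implicit Arguments. Unset Strict Implicit. Unset Printing Implicit Defensive.
Import Order.TTheory GRing.Theory Num.Theory.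
Local Open Scope ring_scope.

Definition simple_graph (n : nat) (e : rel 'I_n) : Prop :=
  symmetric e /\ irreflexive e.

(* number of edges |H| (unordered pairs) *)
Definition nedges (n : nat) (e : rel 'I_n) : nat :=
  #|[set p : 'I_n * 'I_n | (p.1 < p.2)%N && e p.1 p.2]|.

Definition triangle_free (n : nat) (e : rel 'I_n) : Prop :=
  forall x y z : 'I_n, ~~ [&& e x y, e y z & e z x].

Definition regular (n : nat) (e : rel 'I_n) (d : nat) : Prop :=
  forall v : 'I_n, #|[set u | e v u]| = d.

(* H' is a subgraph of H (on the same vertex set; removed vertices can be
   regarded as isolated, which does not affect large components). *)
Definition subgraph (n : nat) (e' e : rel 'I_n) : Prop :=
  simple_graph e' /\ forall x y, e' x y -> e x y.

Definition adjmx (R : realType) (n : nat) (e : rel 'I_n) : 'M[R]_n :=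
  \matrix_(i, j) (e i j)%:R.

Definition spectrum (R : realType) (n : nat) (A : 'M[R]_n) (s : seq R) : Prop :=
  sorted (fun x y => y <= x) s /\ char_poly A = \prod_(x <- s) ('X - x%:P).

Definition component_size (n : nat) (e : rel 'I_n) (v : 'I_n) : nat :=
  #|[set u | connect e v u]|.

(* Main.v *)
Require Import Defs.
From HB Require Import structures.
From mathcomp Require Import all_boot all_order all_algebra.
From mathcomp Require Import reals exp.
From mathcomp Require Import complex ring lra.
Set Implicit Arguments. Unset Strict Implicit. Unset Printing Implicit Defensive.
Import Order.TTheory GRing.Theory Num.Theory.
Local Open Scope ring_scope.

Lemma pow_facts (R : realType) (t : nat) : let u := t%:R `^ (1 / 12%:R) : R in
  [/\ 0 <= u, t%:R = u ^+ 12, t%:R `^ (2%:R / 3%:R) = u ^+ 8 & t%:R `^ (1%:R / 3%:R) = u ^+ 4].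
Proof.
move=> u; have u0 : 0 <= u by apply: powR_ge0.
have key k : u ^+ k = t%:R `^ (1 / 12%:R * k%:R).
  by rewrite powRrM powR_mulrn.
split => //.
- by rewrite key (_ : 1 / 12%:R * 12%:R = 1 :> R) ?powRr1 // ; field.
- by rewrite key; congr (_ `^ _); field.
- by rewrite key; congr (_ `^ _); field.
Qed.

Lemma CS (R : realFieldType) (I : finType) (f g : I -> R) :
  (\sum_i f i * g i) ^+ 2 <= (\sum_i f i ^+ 2) * (\sum_i g i ^+ 2).
Proof.
set S1 := \sum_i f i ^+ 2; set S2 := \sum_i g i ^+ 2; set S3 := \sum_i f i * g i.
have H : 0 <= \sum_i \sum_j (f i * g j - f j * g i) ^+ 2.
  by apply: sumr_ge0 => i _; apply: sumr_ge0 => j _; exact: sqr_ge0.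
have e1 : \sum_i \sum_j f i ^+ 2 * g j ^+ 2 = S1 * S2.
  by rewrite mulr_suml; apply: eq_bigr => i _; rewrite mulr_sumr.
have e2 : \sum_i \sum_j f j ^+ 2 * g i ^+ 2 = S1 * S2.
  by rewrite exchange_big /= mulr_suml; apply: eq_bigr => i _; rewrite mulr_sumr.
have e3 : \sum_i \sum_j (f i * g i) * (f j * g j) = S3 ^+ 2.
  by rewrite expr2 mulr_suml; apply: eq_bigr => i _; rewrite mulr_sumr.
have E : \sum_i \sum_j (f i * g j - f j * g i) ^+ 2 =
   \sum_i \sum_j f i ^+ 2 * g j ^+ 2 + \sum_i \sum_j f j ^+ 2 * g i ^+ 2
   - 2 * \sum_i \sum_j (f i * g i) * (f j * g j).
  rewrite mulr_sumr -!big_split -sumrB /=; apply: eq_bigr => i _.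
  rewrite mulr_sumr -!big_split -sumrB /=; apply: eq_bigr => j _.
  ring.
rewrite E e1 e2 e3 in H; lra.
Qed.

Lemma chain4 (R : realFieldType) n (M : 'M[R]_n) (x y : 'I_n -> R) :
  (forall i j, M i j = M j i) ->
  (\sum_i \sum_j x i * M i j * y j) ^+ 4 <=
  (\sum_i x i ^+ 2) ^+ 2 * (\sum_j y j ^+ 2) ^+ 2 * \tr (M *m M *m M *m M).
Proof.
move=> hM.
set X := \sum_i \sum_j x i * M i j * y j.
set X2 := \sum_i x i ^+ 2; set Y2 := \sum_j y j ^+ 2.
pose z j := \sum_i x i * M i j.
pose N := M *m M.
have hN i k : N i k = N k i.
  rewrite !mxE; apply: eq_bigr => j _; rewrite mulrC; congr (_ * _); exact: hM.
pose w i := \sum_k x k * N k i.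
have eX : X = \sum_j z j * y j.
  rewrite /X exchange_big /=; apply: eq_bigr => j _; rewrite /z mulr_suml.
  by apply: eq_bigr.
set Z := \sum_j z j ^+ 2.
have h1 : X ^+ 2 <= Z * Y2 by rewrite eX; exact: CS.
have eZ : Z = \sum_i x i * w i.
  rewrite /Z /w.
  transitivity (\sum_i \sum_k \sum_j x i * x k * (M i j * M k j)).
    symmetry; under eq_bigr do rewrite exchange_big /=.
    rewrite exchange_big /=; apply: eq_bigr => j _.
    rewrite expr2 /z mulr_suml; apply: eq_bigr => i _.
    rewrite mulr_sumr; apply: eq_bigr => k _; ring.
  apply: eq_bigr => i _; rewrite mulr_sumr; apply: eq_bigr => k _.
  rewrite !mxE mulr_sumr mulr_sumr; apply: eq_bigr => j _.
  rewrite (hM j i); ring.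
set W2 := \sum_i w i ^+ 2.
have h2 : Z ^+ 2 <= X2 * W2 by rewrite eZ; exact: CS.
set T := \sum_i \sum_k N k i ^+ 2.
have h3 : W2 <= X2 * T.
  rewrite /T mulr_sumr; apply: ler_sum => i _; exact: CS.
have eT : T = \tr (M *m M *m M *m M).
  rewrite -mulmxA -/N /mxtrace; apply: eq_bigr => i _.
  rewrite [in RHS]mxE -/N; apply: eq_bigr => k _; by rewrite expr2 hN.
rewrite -eT.
have X20 : 0 <= X2 by apply: sumr_ge0 => i _; exact: sqr_ge0.
have Y20 : 0 <= Y2 by apply: sumr_ge0 => i _; exact: sqr_ge0.
have Z0 : 0 <= Z by apply: sumr_ge0 => i _; exact: sqr_ge0.
have W20 : 0 <= W2 by apply: sumr_ge0 => i _; exact: sqr_ge0.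
have s1 : X ^+ 4 <= (Z * Y2) ^+ 2.
  rewrite (_ : X ^+ 4 = (X ^+ 2) ^+ 2); last by rewrite -exprM.
  by rewrite lerXn2r // ?nnegrE ?sqr_ge0 // mulr_ge0.
apply: (le_trans s1); rewrite exprMn.
apply: (@le_trans _ _ (X2 * W2 * Y2 ^+ 2)).
  by rewrite ler_wpM2r // sqr_ge0.
apply: (le_trans (ler_wpM2r (sqr_ge0 Y2) (ler_wpM2l X20 h3))).
by rewrite le_eqVlt; apply/orP; left; apply/eqP; ring.
Qed.

Lemma sq_center (F : fieldType) n (A J : 'M[F]_n) (a c : F) :
  A *m J = a *: J -> J *m A = a *: J -> J *m J = c *: J -> c != 0 ->
  (A - (a / c) *: J) *m (A - (a / c) *: J) = A *m A - (a ^+ 2 / c) *: J.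
Proof.
move=> AJ JA JJ c0.
rewrite mulmxBl !mulmxBr -!scalemxAl -!scalemxAr AJ JA JJ !scalerA.
apply/matrixP => i j; rewrite !mxE; field; exact: c0.
Qed.

Lemma sum_bool_card (R : realType) (I : finType) (P : pred I) :
  \sum_i ((P i)%:R : R) = #|[set i | P i]|%:R.
Proof.
rewrite -sum1dep_card natr_sum [RHS]big_mkcond /=; apply: eq_bigr => i _.
by case: (P i).
Qed.

Lemma trM4 (R : realType) t (e : rel 'I_t) (d : nat) : (0 < t)%N ->
  symmetric e -> regular e d ->
  let A := adjmx R e in let M := A - ((d%:R : R) / t%:R) *: const_mx 1 in
  \tr (M *m M *m M *m M) = \tr (A *m A *m A *m A) - (d%:R) ^+ 4.
Proof.
move=> t0 esym reg A M.
set J := const_mx 1 : 'M[R]_t.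
have rs i : \sum_k A i k = d%:R.
  by under eq_bigr do rewrite mxE; rewrite sum_bool_card -(reg i).
have AJ : A *m J = d%:R *: J.
  apply/matrixP => i j; rewrite !mxE mulr1 -(rs i); apply: eq_bigr => k _.
  by rewrite [J _ _]mxE mulr1.
have JA : J *m A = d%:R *: J.
  apply/matrixP => i j; rewrite !mxE mulr1 -(rs j); apply: eq_bigr => k _.
  by rewrite [J _ _]mxE mul1r /A !mxE esym.
have JJ : J *m J = t%:R *: J.
  apply/matrixP => i j; rewrite !mxE mulr1.
  under eq_bigr do rewrite !mxE mulr1.
  by rewrite sumr_const card_ord.
have tn0 : (t%:R : R) != 0 by rewrite pnatr_eq0 -lt0n.
have M2 : M *m M = A *m A - ((d%:R : R) ^+ 2 / t%:R) *: J by apply: sq_center.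
have AAJ : (A *m A) *m J = d%:R ^+ 2 *: J by rewrite -mulmxA AJ -scalemxAr AJ scalerA expr2.
have JAA : J *m (A *m A) = d%:R ^+ 2 *: J by rewrite mulmxA JA -scalemxAl JA scalerA expr2.
have M4 := sq_center AAJ JAA JJ tn0.
rewrite -mulmxA M2 M4 !mulmxA mxtraceD raddfN /= mxtraceZ.
have -> : \tr J = t%:R by rewrite /mxtrace; under eq_bigr do rewrite mxE; rewrite sumr_const card_ord.
congr (_ - _); field; exact: tn0.
Qed.

Lemma exists_cut (R : realType) t (e : rel 'I_t) (a B : R) :
  0 < a -> a <= t%:R -> (forall v, (component_size e v)%:R < B) ->
  exists S : {set 'I_t}, [/\ forall u w, u \in S -> e u w -> w \in S,
     a <= #|S|%:R & #|S|%:R < a + B].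
Proof.
move=> a0 aT hB.
pose Sk k := [set u | [exists v : 'I_t, (v < k)%N && connect e v u]].
have clos k u w : u \in Sk k -> e u w -> w \in Sk k.
  rewrite !inE => /existsP [v /andP [vk cvu]] euw; apply/existsP; exists v.
  by rewrite vk /=; apply: connect_trans cvu (connect1 euw).
pose P k := a <= #|Sk k|%:R.
have Pt : P t.
  rewrite /P (_ : Sk t = setT) ?cardsT ?card_ord //.
  by apply/setP => u; rewrite !inE; apply/existsP; exists u; rewrite ltn_ord connect0.
have exP : exists k, P k by exists t.
case: (ex_minnP exP) => k Pk kmin.
have kt : (k <= t)%N by apply: kmin.
have k0 : (0 < k)%N.
  rewrite lt0n; apply/negP => /eqP k0; move: Pk; rewrite /P k0.
  rewrite (_ : Sk 0%N = set0) ?cards0.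
    by rewrite leNgt a0.
  by apply/setP => u; rewrite !inE; apply/existsP => [[v]].
have k1t : (k.-1 < t)%N by rewrite prednK // .
pose v0 := Ordinal k1t.
have nP : ~~ P k.-1.
  by apply/negP => /kmin; rewrite -{1}(prednK k0) ltnn.
exists (Sk k); split => //.
- exact: clos.
have sub : Sk k \subset Sk k.-1 :|: [set u | connect e v0 u].
  apply/subsetP => u; rewrite !inE => /existsP [v /andP [vk cvu]].
  have [vlt|vge] := ltnP v k.-1.
    by apply/orP; left; apply/existsP; exists v; rewrite vlt.
  have -> : v0 = v by apply/val_inj => /=; move: vk; rewrite -{1}(prednK k0) ltnS => vk; apply/eqP; rewrite eqn_leq vge vk.
  by rewrite cvu orbT.
have := subset_leq_card sub; rewrite -(ler_nat R) => h1.
have h2 := (leq_card_setU (Sk k.-1) [set u | connect e v0 u]).1.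
rewrite -(ler_nat R) natrD in h2.
have h3 := hB v0; rewrite /component_size in h3.
rewrite /P -ltNge in nP.
lra.
Qed.

Lemma cut_edges t (e e' : rel 'I_t) (S : {set 'I_t}) :
  (forall x y, e' x y -> e x y) -> symmetric e' -> symmetric e ->
  (forall u w, u \in S -> e' u w -> w \in S) ->
  (nedges e' + #|[set p : 'I_t * 'I_t | [&& p.1 \in S, p.2 \notin S & e p.1 p.2]]| <= nedges e)%N.
Proof.
move=> sub sym' sym clos.
set X := [set p : 'I_t * 'I_t | _].
pose f (p : 'I_t * 'I_t) := if (p.1 < p.2)%N then p else (p.2, p.1).
have finj : {in X &, injective f}.
  move=> [a b] [c d]; rewrite !inE /= /f /= => /and3P[aS bS _] /and3P[cS dS _].
  case: ltnP => ab; case: ltnP => cd //= [] e1 e2; subst.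
  - by rewrite aS in dS.
  - by rewrite cS in bS.
  - by [].
have cardX : #|f @: X| = #|X| := card_in_imset finj.
set E' := [set p : 'I_t * 'I_t | (p.1 < p.2)%N && e' p.1 p.2].
set E := [set p : 'I_t * 'I_t | (p.1 < p.2)%N && e p.1 p.2].
have dis : E' :&: f @: X = set0.
  apply/setP => p; rewrite !inE; apply/negP => /andP [/andP [_ ep]] /imsetP [[a b]].
  rewrite inE /= => /and3P [aS bS _] pf.
  move: ep; rewrite pf /f /=; case: ltnP => _ /= ep.
    by move: (clos _ _ aS ep); rewrite (negbTE bS).
  by have := clos a b aS; rewrite sym' ep (negbTE bS) => /(_ isT).
have sU : E' :|: f @: X \subset E.
  apply/subsetP => p; rewrite !inE => /orP [/andP [lt ep]|].
    by rewrite lt sub.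
  move=> /imsetP [[a b]]; rewrite inE /= => /and3P [aS bS eab] ->.
  rewrite /f /=; case: (ltngtP a b) => ab /=.
  - by rewrite ab eab.
  - by rewrite ab sym.
  - by move: ab aS bS => /val_inj -> ->.
have := subset_leq_card sU.
have := cardsUI E' (f @: X); rewrite dis cards0 addn0 => ->.
by rewrite cardX.
Qed.

Lemma nedges_le (R : realType) t (e : rel 'I_t) d : regular e d ->
  (nedges e)%:R <= (t%:R * d%:R : R).
Proof.
move=> reg.
have sub : [set p : 'I_t * 'I_t | (p.1 < p.2)%N && e p.1 p.2] \subset [set p | e p.1 p.2].
  by apply/subsetP => p; rewrite !inE => /andP [].
apply: (le_trans (_ : _ <= #|[set p : 'I_t * 'I_t | e p.1 p.2]|%:R)).
  by rewrite ler_nat; apply: subset_leq_card.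
rewrite -sum_bool_card -(pair_big xpredT xpredT (fun u w => ((e u w)%:R : R))) /=.
under eq_bigr do rewrite sum_bool_card reg.
by rewrite sumr_const card_ord mulr_natl.
Qed.

Lemma cross_sum (R : realType) t (e : rel 'I_t) (S : {set 'I_t}) :
  #|[set p : 'I_t * 'I_t | [&& p.1 \in S, p.2 \notin S & e p.1 p.2]]|%:R =
  \sum_u \sum_w ((u \in S)%:R * (e u w)%:R * (w \notin S)%:R : R).
Proof.
rewrite [RHS]pair_big /= -sum_bool_card.
apply: eq_bigr => p _.
by case: (p.1 \in S); case: (p.2 \in S); case: (e p.1 p.2); rewrite /= ?mulr0 ?mul0r ?mulr1.
Qed.

Lemma spec_bound (R : realType) t (A : 'M[R]_t) (s : seq R) (d B : R) :
  char_poly A = \prod_(x <- s) ('X - x%:P) ->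
  d \in s -> B < d -> (forall i : nat, (0 < i < size s)%N -> `|s`_i| <= B) ->
  \sum_(x <- s) x ^+ 4 - d ^+ 4 <= t%:R * B ^+ 4.
Proof.
move=> cA ds Bd hs.
have szs : size s = t.
  by have := size_char_poly A; rewrite cA size_prod_XsubC => -[].
have i0 : index d s = 0%N.
  apply/eqP; apply: contraT; rewrite -lt0n => i0.
  have := hs (index d s); rewrite i0 index_mem ds nth_index // => /(_ isT) h.
  have : d <= B by apply: le_trans h; exact: ler_norm.
  by rewrite leNgt Bd.
case: s cA ds hs szs i0 => [//|x s'] cA ds hs szs /=.
case: eqP => // <- _.
rewrite big_cons addrC addKr.
have B4 : 0 <= B ^+ 4 by rewrite exprn_even_ge0.
apply: (le_trans (y := \sum_(y <- s') B ^+ 4)).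
  rewrite big_seq [X in _ <= X]big_seq; apply: ler_sum => y ys'.
  have := hs (index y s').+1; rewrite /= ltnS index_mem ys' nth_index // => /(_ isT) h.
  rewrite -[y ^+ 4]ger0_norm ?exprn_even_ge0 // normrX lerXn2r //.
  by rewrite nnegrE; exact: le_trans (normr_ge0 _) h.
rewrite (big_nth 0) sumr_const_nat subn0 -mulr_natl -szs /=.
have hs1 : ((size s')%:R : R) <= (size s').+1%:R by rewrite ler_nat.
rewrite -mulr_natl; nra.
Qed.

Lemma char_poly_conj (F : fieldType) n (P B : 'M[F]_n) : P \in unitmx ->
  char_poly (invmx P *m B *m P) = char_poly B.
Proof.
move=> Pu; rewrite /char_poly /char_poly_mx.
set Q := map_mx polyC P; set Qi := map_mx polyC (invmx P).
have QiQ : Qi *m Q = 1%:M by rewrite -map_mxM mulVmx // map_mx1.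
have -> : 'X%:M - map_mx polyC (invmx P *m B *m P) = Qi *m ('X%:M - map_mx polyC B) *m Q.
  rewrite !map_mxM mulmxBr mulmxBl -/Q -/Qi; congr (_ - _).
  by rewrite scalar_mxC -mulmxA QiQ mulmx1.
rewrite !det_mulmx mulrC mulrA -det_mulmx mulmxE.
rewrite -mulmxE. 
by rewrite (_ : Q *m Qi = 1%:M) ?det1 ?mul1r // -map_mxM mulmxV // map_mx1.
Qed.

Lemma tr4_spectrum (C : numClosedFieldType) n (A : 'M[C]_n) (s : seq C) :
  A \is normalmx -> char_poly A = \prod_(x <- s) ('X - x%:P) ->
  \tr (A *m A *m A *m A) = \sum_(x <- s) x ^+ 4.
Proof.
move=> /orthomx_spectralP eA cA.
set P := spectralmx A in eA; set sp := spectral_diag A in eA.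
have Pu : P \in unitmx := spectral_unit A.
have cD : char_poly (diag_mx sp) = \prod_(x <- [seq sp 0 i | i <- enum 'I_n]) ('X - x%:P).
  rewrite char_poly_trig ?diag_mx_is_trig // big_map big_enum /=.
  by apply: eq_bigr => i _; rewrite mxE eqxx mulr1n.
have pe : perm_eq s [seq sp 0 i | i <- enum 'I_n].
  by apply: prod_XsubC_eq; rewrite -cA -cD eA char_poly_conj.
rewrite (perm_big _ pe) big_map big_enum /=.
have -> : A *m A *m A *m A = invmx P *m (diag_mx sp *m (diag_mx sp *m (diag_mx sp *m diag_mx sp))) *m P.
  have h X Y : (invmx P *m X *m P) *m (invmx P *m Y *m P) = invmx P *m (X *m Y) *m P.
    by rewrite !mulmxA mulmxK // !mulmxA.
  by rewrite eA !h -!mulmxA.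
rewrite mxtrace_mulC.
rewrite mulKVmx // /mxtrace.
apply: eq_bigr => i _; rewrite !mul_diag_mx !mxE eqxx mulr1n.
by rewrite !exprS expr0 mulr1 !mulrA.
Qed.

Lemma tr4_adj (R : realType) n (e : rel 'I_n) (s : seq R) : symmetric e ->
  spectrum (adjmx R e) s ->
  \tr (adjmx R e *m adjmx R e *m adjmx R e *m adjmx R e) = \sum_(x <- s) x ^+ 4.
Proof.
move=> esym [_ cA].
set A := adjmx R e.
pose f := real_complex R.
pose Ac := map_mx f A.
have AcE : Ac = \matrix_(i, j) ((e i j)%:R : R[i]).
  by apply/matrixP => i j; rewrite !mxE /f rmorph_nat.
have nAc : Ac \is normalmx.
  apply: symmetric_normalmx.
    rewrite qualifE /= expr0 scale1r AcE.
    by apply/eqP/matrixP => i j; rewrite !mxE esym.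
  apply/mxOverP => i j; rewrite AcE mxE. exact: realn.
have cAc : char_poly Ac = \prod_(x <- map f s) ('X - x%:P).
  by rewrite /Ac -map_char_poly /A cA map_prod_XsubC big_map; apply: eq_bigr.
have h := tr4_spectrum nAc cAc.
rewrite big_map in h.
apply: (@complexI R).
transitivity (\tr (Ac *m Ac *m Ac *m Ac)).
  rewrite /Ac -!map_mxM /mxtrace rmorph_sum.
  by apply: eq_bigr => i _; rewrite [in RHS]mxE.
rewrite rmorph_sum /=.
apply: (etrans h); apply: eq_bigr => x _; by rewrite /f rmorphXn.
Qed.

Unset Implicit Arguments.
Set Strict Implicit.

Theorem corollary4p10 (R : realType)
  (T : pred nat) (G : forall t : nat, rel 'I_t) (d : nat -> nat)
  (HTpos : forall t, T t -> (0 < t)%N)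
  (HTinf : forall N : nat, exists t, (N <= t)%N /\ T t)
  (Hsimple : forall t, T t -> simple_graph (G t))
  (Htri : forall t, T t -> triangle_free (G t))
  (Hreg : forall t, T t -> regular (G t) (d t))
  (Hdeg : exists c1 c2 : R, 0 < c1 /\ 0 < c2 /\ exists N : nat,
      forall t, T t -> (N <= t)%N ->
        c1 * (t%:R `^ (2%:R / 3%:R)) <= (d t)%:R <= c2 * (t%:R `^ (2%:R / 3%:R)))
  (Heig : exists C : R, 0 < C /\ exists N : nat,
      forall t, T t -> (N <= t)%N ->
        exists s : seq R, spectrum (adjmx R (G t)) s /\
          forall i : nat, (0 < i < size s)%N -> `|s`_i| <= C * (t%:R `^ (1%:R / 3%:R)))
  (G' : forall t : nat, rel 'I_t)
  (Hsub : forall t, T t -> subgraph (G' t) (G t))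
  (Hedges : forall eps : R, 0 < eps -> exists N : nat,
      forall t, T t -> (N <= t)%N -> (1 - eps) * (nedges (G t))%:R <= (nedges (G' t))%:R) :
  forall eps : R, 0 < eps -> exists N : nat,
    forall t, T t -> (N <= t)%N ->
      exists v : 'I_t, (1 - eps) * t%:R <= (component_size (G' t) v)%:R.
Proof.
move=> eps eps0.
have [eps1|epsl1] := leP 1 eps.
  exists 0%N => t Tt _; exists (Ordinal (HTpos t Tt)).
  apply: (@le_trans _ _ 0); last exact: ler0n.
  by rewrite mulr_le0_ge0 ?ler0n // subr_le0.
case: Hdeg => c1 [c2 [c10 [c20 [Nd Hd]]]].
case: Heig => C [C0 [Ne He]].
have eps80 : 0 < eps / 8%:R by rewrite divr_gt0 // ltr0n.
case: (Hedges _ eps80) => Nh Hh.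
pose K := 8%:R * C / (c1 * eps) + C / c1 + 1.
pose N0 := (Num.truncn (K ^+ 12)).+1.
exists (maxn (maxn Nd Ne) (maxn Nh N0)) => t Tt tN.
have t0 := HTpos t Tt.
have [esym _] := Hsimple t Tt.
have [[esym' _] sub] := Hsub t Tt.
have reg := Hreg t Tt.
have := pow_facts R t; set u := _ `^ _; case=> u0 tE e23 e13.
have hd := Hd t Tt (leq_trans (leq_trans (leq_maxl _ _) (leq_maxl _ _)) tN).
rewrite e23 in hd; case/andP: hd => hd _.
have [s [spec hs]] := He t Tt (leq_trans (leq_trans (leq_maxr _ _) (leq_maxl _ _)) tN).
rewrite e13 in hs.
have hh := Hh t Tt (leq_trans (leq_trans (leq_maxl _ _) (leq_maxr _ _)) tN).
have tN0 : (N0 <= t)%N := leq_trans (leq_trans (leq_maxr _ _) (leq_maxr _ _)) tN.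
have uK : K < u.
  rewrite ltNge; apply/negP => uK.
  have K0 : 0 <= K by apply: le_trans uK.
  have : u ^+ 12 <= K ^+ 12 by rewrite lerXn2r // nnegrE.
  rewrite -tE => h.
  have := truncnS_gt (K ^+ 12); rewrite -/N0 => h2.
  have : (N0%:R : R) <= t%:R by rewrite ler_nat.
  lra.
case: (pickP (fun v => (1 - eps) * t%:R <= (component_size (G' t) v)%:R)) => [v hv|hnone].
  by exists v.
exfalso.
have hB v : (component_size (G' t) v)%:R < (1 - eps) * t%:R.
  by move: (hnone v) => /negbT; rewrite -ltNge.
have tpos : (0 : R) < t%:R by rewrite ltr0n.
have ta : eps * t%:R / 2%:R <= t%:R by rewrite ler_pdivrMr ?ltr0n //; nra.
have a0 : 0 < eps * t%:R / 2%:R by rewrite divr_gt0 ?ltr0n // mulr_gt0.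
have [S [clos Sa Sb]] := exists_cut (R := R) (e := G' t) a0 ta hB.
set nS := (#|S|%:R : R) in Sa Sb.
have nSc : (#|~: S|%:R : R) = t%:R - nS.
  by rewrite /nS -[in t%:R](card_ord t) -(cardsC S) natrD addrC addKr.
have hcut := cut_edges sub esym' esym clos.
have hne := nedges_le R reg.
pose A := adjmx R (G t).
pose M := A - ((d t)%:R / t%:R) *: (const_mx 1 : 'M[R]_t).
pose x (k : 'I_t) := ((k \in S)%:R : R).
pose y (k : 'I_t) := ((k \notin S)%:R : R).
have cross := cross_sum R (G t) S.
have sx : \sum_k x k = nS.
  by rewrite /x sum_bool_card /nS; apply/eqP; rewrite eqr_nat; apply/eqP; apply: eq_card => k; rewrite inE.
have sy : \sum_k y k = t%:R - nS.
  by rewrite /y sum_bool_card -nSc; congr (#|_|%:R); apply: eq_card => k; rewrite !inE.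
have sx2 : \sum_k x k ^+ 2 = nS.
  by rewrite -sx; apply: eq_bigr => k _; rewrite /x; case: (k \in S); rewrite ?expr0n ?expr1n.
have sy2 : \sum_k y k ^+ 2 = t%:R - nS.
  by rewrite -sy; apply: eq_bigr => k _; rewrite /y; case: (k \in S); rewrite ?expr0n ?expr1n.
set Z := \sum_k \sum_w x k * M k w * y w.
have hsplit : (#|[set p : 'I_t * 'I_t | [&& p.1 \in S, p.2 \notin S & G t p.1 p.2]]|%:R : R) =
    Z + (d t)%:R / t%:R * (nS * (t%:R - nS)).
  rewrite cross /Z -sy -sx mulr_suml mulr_sumr -big_split /=; apply: eq_bigr => k _.
  rewrite mulr_sumr mulr_sumr -big_split /=; apply: eq_bigr => w _.
  rewrite /M !mxE /x /y; ring.
have Msym i j : M i j = M j i by rewrite /M !mxE esym.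
have hX := chain4 x y Msym.
rewrite -/Z sx2 sy2 in hX.
have htr : \tr (M *m M *m M *m M) = \sum_(z <- s) z ^+ 4 - (d t)%:R ^+ 4.
  by rewrite /M /A trM4 // (tr4_adj esym spec).
have ds : (d t)%:R \in s.
  have ev : eigenvalue A (d t)%:R.
    apply/eigenvalueP; exists (const_mx 1 : 'rV[R]_t).
      apply/matrixP => i j; rewrite !mxE mulr1.
      rewrite -(reg j) -sum_bool_card; apply: eq_bigr => k _.
      by rewrite !mxE mul1r esym.
    apply/eqP => /matrixP /(_ ord0 (Ordinal t0)); rewrite !mxE => /eqP.
    by rewrite oner_eq0.
  by rewrite eigenvalue_root_char spec.2 root_prod_XsubC in ev.
have c1C : 0 < C / c1 by rewrite divr_gt0.
have Kpos : 0 < 8%:R * C / (c1 * eps) by rewrite divr_gt0 ?mulr_gt0 ?ltr0n.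
have u1 : 1 < u by rewrite /K in uK; lra.
have uC : C / c1 < u by rewrite /K in uK; lra.
have u3 : 1 <= u ^+ 3 by rewrite exprn_ege1 // ltW.
have u4u : u <= u ^+ 4 by rewrite exprS -{1}(mulr1 u) ler_wpM2l.
have cu : C < c1 * u ^+ 4.
  rewrite (_ : C = c1 * (C / c1)); last by field; rewrite gt_eqF.
  by rewrite ltr_pM2l //; apply: lt_le_trans u4u.
have u40 : 0 < u ^+ 4 by rewrite exprn_gt0 // (lt_trans _ u1).
have Bd : C * u ^+ 4 < (d t)%:R.
  apply: lt_le_trans hd.
  have e8 : u ^+ 8 = u ^+ 4 * u ^+ 4 by rewrite -exprD.
  by rewrite e8 mulrA ltr_pM2r.
have hsb := spec_bound spec.2 ds Bd hs.
rewrite -htr in hsb.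
set tt := (t%:R : R) in tE ta a0 Sa Sb nSc sy sy2 hsplit hX hsb tpos hne hB.
set D := ((d t)%:R : R) in hd hsplit hsb Bd hne.
set nG := ((nedges (G t))%:R : R) in hh hne.
set nG' := ((nedges (G' t))%:R : R) in hh.
set cnt := (#|_|%:R : R) in hsplit.
have hcR : cnt + nG' <= nG.
  by rewrite /cnt /nG /nG' -natrD ler_nat addnC.
have D0 : 0 < D by apply: lt_trans Bd; rewrite mulr_gt0.
set a := eps * tt / 2%:R in ta a0 Sa Sb.
have aE : a * 2%:R = eps * tt by rewrite /a; field.
have nS0 : 0 <= nS by apply: le_trans Sa; exact: ltW.
have nSt : nS <= tt.
  by rewrite /nS /tt ler_nat; have := subset_leq_card (subsetT S); rewrite cardsT card_ord.
set P := nS * (tt - nS) in hsplit.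
have hP : eps * tt * tt / 4%:R <= P.
  have h1 : 0 <= (nS - a) * (tt - a - nS) by apply: mulr_ge0; lra.
  have h2 : 0 <= a * (tt - a - a) by apply: mulr_ge0; lra.
  have : a * tt / 2%:R <= P by rewrite /P; nra.
  by rewrite (_ : a * tt / 2%:R = eps * tt * tt / 4%:R) // /a; field.
have hDP : D * eps * tt / 4%:R <= D / tt * P.
  have := ler_wpM2l (ltW (divr_gt0 D0 tpos)) hP.
  by rewrite (_ : D / tt * (eps * tt * tt / 4%:R) = D * eps * tt / 4%:R) //; field; rewrite gt_eqF.
have hc : cnt <= eps / 8%:R * (tt * D).
  have nG0 : 0 <= nG by rewrite ler0n.
  have : 0 <= nG' by rewrite ler0n.
  have := ler_wpM2l (ltW eps80) hne.
  nra.
set W := D * eps * tt / 8%:R.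
have W0 : 0 < W by apply: divr_gt0; [rewrite !mulr_gt0 | rewrite ltr0n].
have hZ : W <= - Z.
  rewrite /W; lra.
have e4 (r : R) : r ^+ 4 = (r ^+ 2) ^+ 2 by rewrite -exprM.
have hZ4 : W ^+ 4 <= Z ^+ 4.
  rewrite (_ : Z ^+ 4 = (- Z) ^+ 4); last by rewrite (e4 Z) (e4 (- Z)) sqrrN.
  rewrite lerXn2r // nnegrE; [exact: ltW | exact: le_trans (ltW W0) hZ].
have hPt : P <= tt * tt.
  by rewrite /P; apply: ler_pM => //; lra.
have P0 : 0 <= P by rewrite /P; apply: mulr_ge0 => //; lra.
pose B := tt * (C * u ^+ 4) ^+ 4.
have B0 : 0 <= B by rewrite /B mulr_ge0 ?exprn_even_ge0 // ltW.
have hR : Z ^+ 4 <= C ^+ 4 * u ^+ 76.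
  apply: (le_trans hX); rewrite -exprMn -/P.
  apply: (@le_trans _ _ (P ^+ 2 * B)).
    by apply: ler_wpM2l => //; rewrite exprn_even_ge0.
  apply: (@le_trans _ _ ((tt * tt) ^+ 2 * B)).
    by apply: ler_wpM2r => //; rewrite lerXn2r // nnegrE mulr_ge0 // ltW.
  by rewrite /B tE le_eqVlt; apply/orP; left; apply/eqP; ring.
pose V := c1 * eps / 8%:R * u.
have V0 : 0 <= V.
  rewrite /V; apply: ltW; rewrite !mulr_gt0 // ?invr_gt0 ?ltr0n //; exact: lt_trans ltr01 u1.
have hW : V * u ^+ 19 <= W.
  have h8 : 0 <= eps * tt / 8%:R by apply: ltW; rewrite !mulr_gt0 // ?invr_gt0 ?ltr0n.
  have := ler_wpM2r h8 hd.
  rewrite (_ : c1 * u ^+ 8 * (eps * tt / 8%:R) = V * u ^+ 19); last by rewrite /V tE; ring.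
  by rewrite (_ : D * (eps * tt / 8%:R) = W) // /W; ring.
have hW4 : (V * u ^+ 19) ^+ 4 <= W ^+ 4.
  rewrite lerXn2r // nnegrE; last exact: ltW.
  by apply: mulr_ge0 => //; exact: exprn_ge0.
have h76 : V ^+ 4 * u ^+ 76 <= C ^+ 4 * u ^+ 76.
  rewrite (_ : V ^+ 4 * u ^+ 76 = (V * u ^+ 19) ^+ 4); last by ring.
  exact: le_trans hW4 (le_trans hZ4 hR).
have u76 : 0 < u ^+ 76 by rewrite exprn_gt0 // (lt_trans _ u1).
have hVC : V <= C.
  move: h76; rewrite ler_pM2r // ler_pXn2r // nnegrE //; exact: ltW.
have : u <= 8%:R * C / (c1 * eps).
  have c1e : 0 < c1 * eps by rewrite mulr_gt0.
  rewrite ler_pdivlMr //.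
  move: hVC; rewrite /V.
  have -> : c1 * eps / 8%:R * u = (u * (c1 * eps)) / 8%:R by field.
  by rewrite ler_pdivrMr ?ltr0n // [C * _]mulrC.
rewrite /K in uK; lra.
Qed.
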